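(* Let $P$ be a lattice-face $d$-simplex with vertices $v_1,\dots,v_{d+1}$. For every $\sigma\in\mathfrak S_d$, every $1\le k\le d$ and every $0\le j\le k-1$, $$\frac{\mathfrak m(\sigma,k;j)}{\det Y(\sigma,k)}\in\mathbb Z .$$
   Context: Write $v_i=(x_{i,1},\dots,x_{i,d})$. $Y(\sigma,k)$ is the $k\times k$ matrix with rows $(1,x_{\sigma(r),1},\dots,x_{\sigma(r),k-1})$, $r=1,\dots,k$. Let $A(\sigma,k)$ be the $k\times(k+1)$ matrix with rows $(1,x_{\sigma(r),1},\dots,x_{\sigma(r),k})$, $r=1,\dots,k$, with columns indexed $1,\dots,k+1$; $\mathfrak m(\sigma,k;j)$ is the determinant of the $k\times k$ matrix obtained from $A(\sigma,k)$ by deleting column $j+1$ (so $\mathfrak m(\sigma,k;k)=\det Y(\sigma,k)$). Lattice-face polytopes are defined recursively, with $\pi:\mathbb R^d\to\mathbb R^{d-1}$ forgetting the last coordinate: a segment in $\mathbb R$ is lattice-face if its endpoints are integers; for $d\ge2$, a $d$-polytope $P\subset\mathbb R^d$ with vertex set $V$ is lattice-face if for every $d$-element $U\subset V$: (a) $\pi(\mathrm{conv}(U))$ is a lattice-face polytope in $\mathbb R^{d-1}$, and (b) $\pi(H_U\cap\mathbb Z^d)=\mathbb Z^{d-1}$, $H_U$ the affine span of $U$. *)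

(* Defs.v *)
From HB Require Import structures.
From mathcomp Require Import all_boot all_order all_algebra all_fingroup.
From mathcomp Require Import boolp reals.
Set Implicit Arguments. Unset Strict Implicit. Unset Printing Implicit Defensive.
Import Order.TTheory GRing.Theory Num.Theory.
Local Open Scope ring_scope.

Section LatticeFace.
Variable R : realType.

Definition is_intR (x : R) : Prop := exists z : int, x = z%:~R.

Definition int_pt n (x : 'rV[R]_n) : Prop := forall i, is_intR (x 0 i).

Definition in_conv n (S : seq 'rV[R]_n) (x : 'rV[R]_n) : Prop :=
  exists l : 'I_(size S) -> R,
    (forall i, 0 <= l i) /\ \sum_i l i = 1 /\ x = \sum_i l i *: S`_i.

Definition in_aff n (S : seq 'rV[R]_n) (x : 'rV[R]_n) : Prop :=
  exists l : 'I_(size S) -> R, \sum_i l i = 1 /\ x = \sum_i l i *: S`_i.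

Definition vertices n (S : seq 'rV[R]_n) : seq 'rV[R]_n :=
  [seq x <- undup S | `[< ~ in_conv (rem x (undup S)) x >] ].

Definition full_dim n (S : seq 'rV[R]_n) : Prop := forall x, in_aff S x.

Definition proj_last n (x : 'rV[R]_n.+1) : 'rV[R]_n :=
  \row_(i < n) x 0 (widen_ord (leqnSn n) i).

Fixpoint lattice_face (n : nat) : seq 'rV[R]_n.+1 -> Prop :=
  match n return seq 'rV[R]_n.+1 -> Prop with
  | 0 => fun S =>
      size (vertices S) = 2%N /\ (forall x, x \in vertices S -> int_pt x)
  | m.+1 => fun S =>
      full_dim (vertices S) /\
      forall U : seq 'rV[R]_m.+2,
        subseq U (vertices S) -> size U = m.+2 ->
        @lattice_face m (map (@proj_last m.+1) U) /\
        (forall y : 'rV[R]_m.+1,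
            int_pt y <-> exists x, [/\ in_aff U x, int_pt x & proj_last x = y])
  end.

Definition aff_indep n m (v : 'I_m -> 'rV[R]_n) : Prop :=
  forall l : 'I_m -> R, \sum_i l i = 0 -> \sum_i l i *: v i = 0 -> forall i, l i = 0.

Section Minors.
Variables (n : nat) (v : 'I_n.+2 -> 'rV[R]_n.+1) (s : 'S_n.+1) (k : nat).

(* 0-indexed coordinate c of the vertex v_{sigma(r)} (vertices v_1..v_d) *)
Definition xco (r : 'I_k) (c : nat) : R :=
  v (widen_ord (leqnSn n.+1) (s (inord r))) 0 (inord c).

(* A(sigma,k): k x (k+1), rows (1, x_{sigma(r),1}, ..., x_{sigma(r),k}) *)
Definition Amx : 'M[R]_(k, k.+1) :=
  \matrix_(r < k, c < k.+1) (if c == 0 :> nat then 1 else xco r c.-1).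

(* Y(sigma,k): k x k, rows (1, x_{sigma(r),1}, ..., x_{sigma(r),k-1}) *)
Definition Ymx : 'M[R]_k :=
  \matrix_(r < k, c < k) (if c == 0 :> nat then 1 else xco r c.-1).

(* m(sigma,k;j): determinant of A(sigma,k) with (1-indexed) column j+1 deleted *)
Definition mminor (j : nat) : R :=
  \det (\matrix_(r < k, c < k) Amx r (lift (inord j : 'I_k.+1) c)).

End Minors.
End LatticeFace.
Arguments lattice_face {R} n _.

(* Main.v *)
Require Import Defs.
From HB Require Import structures.
From mathcomp Require Import all_boot all_order all_algebra all_fingroup.
From mathcomp Require Import boolp reals.
From mathcomp Require Import zify.
Set Implicit Arguments. Unset Strict Implicit. Unset Printing Implicit Defensive.
Import Order.TTheory GRing.Theory Num.Theory.
Local Open Scope ring_scope.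

Section Proofs.
Variable R : realType.

Lemma intR0 : is_intR (0:R). Proof. by exists 0. Qed.
Lemma intR1 : is_intR (1:R). Proof. by exists 1. Qed.
Lemma intRD (x y : R) : is_intR x -> is_intR y -> is_intR (x + y).
Proof. by move=> [a ->] [b ->]; exists (a + b); rewrite intrD. Qed.
Lemma intRN (x : R) : is_intR x -> is_intR (- x).
Proof. by move=> [a ->]; exists (- a); rewrite intrN. Qed.
Lemma intRM (x y : R) : is_intR x -> is_intR y -> is_intR (x * y).
Proof. by move=> [a ->] [b ->]; exists (a * b); rewrite intrM. Qed.
Lemma intRn (k : nat) : is_intR (k%:R : R).
Proof. by exists k; rewrite pmulrn. Qed.

Lemma full_dim_size D (V : seq 'rV[R]_D.+1) : full_dim V -> (D.+1 < size V)%N.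
Proof.
move=> HV.
pose z (x : 'rV[R]_D.+1) : 'rV[R]_D.+2 :=
  \row_(j < D.+2) (if j == 0 :> nat then 1 else x 0 (inord j.-1)).
pose B : 'M[R]_(size V, D.+2) := \matrix_(i, j) z V`_i 0 j.
have zB x : (z x <= B)%MS.
  have [l [l1 xl]] := HV x.
  suff -> : z x = (\row_i l i) *m B by apply: submxMl.
  apply/rowP => j; rewrite !mxE.
  under eq_bigr do rewrite !mxE.
  case: eqP => _.
    by under eq_bigr do rewrite mulr1; rewrite l1.
  by rewrite xl summxE; apply: eq_bigr => i _; rewrite mxE.
have allB (u : 'rV[R]_D.+2) : (u <= B)%MS.
  pose x := \row_(i < D.+1) u 0 (inord i.+1).
  have -> : u = z x + (u 0 0 - 1) *: z 0.
    apply/rowP => j; rewrite !mxE; case: eqP => [j0|jn0].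
      have -> : j = 0 by apply/val_inj.
      by rewrite mulr1 addrC subrK.
    rewrite mulr0 addr0; congr (u 0 _); apply/val_inj => /=.
    have j0 : (0 < j)%N by rewrite lt0n; apply/eqP.
    rewrite (@inordK D j.-1); last by have := ltn_ord j; lia.
    by rewrite prednK // inordK.
  by rewrite addmx_sub ?scalemx_sub ?zB.
have : (1%:M <= B)%MS by apply/row_subP => i; apply: allB.
move/mxrankS; rewrite mxrank1 => h; exact: leq_trans h (rank_leq_row B).
Qed.

Lemma vertices_subseq n (S : seq 'rV[R]_n) : subseq (vertices S) S.
Proof. exact: subseq_trans (filter_subseq _ _) (undup_subseq S). Qed.
Lemma vertices_uniq n (S : seq 'rV[R]_n) : uniq (vertices S).
Proof. exact: filter_uniq (undup_uniq S). Qed.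

Lemma lf_vertices m (W : seq 'rV[R]_m.+1) :
  lattice_face m W -> size W = m.+2 -> vertices W = W.
Proof.
move=> H sW; apply/eqP.
have hs := size_subseq (vertices_subseq W).
have hl : (m.+2 <= size (vertices W))%N.
  case: m W H sW hs => [|m] W H sW hs /=; first by case: H => ->.
  by case: H => /full_dim_size.
by rewrite -(size_subseq_leqif (vertices_subseq W)).2 eqn_leq hs sW hl.
Qed.

Definition gco D (c : nat) (x : 'rV[R]_D.+1) : R :=
  if c == 0 then 1 else x 0 (inord c.-1).

Lemma gco_lift D (i : 'I_D.+1) (y : 'rV[R]_D.+1) : gco (lift ord0 i) y = y 0 i.
Proof. by rewrite /gco lift0 /= inord_val. Qed.

Lemma core m (U : seq 'rV[R]_m.+2) (a : 'I_m.+2 -> R) :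
  (forall y : 'rV[R]_m.+1, int_pt y ->
     exists x, [/\ in_aff U x, int_pt x & proj_last x = y]) ->
  (forall u, u \in U -> u 0 (inord m.+1) = \sum_c a c * gco c u) ->
  forall c, is_intR (a c).
Proof.
move=> Hb He.
have F y : int_pt y -> is_intR (\sum_(c < m.+2) a c * gco c (y : 'rV_m.+1)).
  move=> /Hb [x [[l [l1 xl]] xi px]].
  have gx (c : 'I_m.+2) : gco c x = gco c y.
    rewrite /gco; case: eqP => // c0; rewrite -px mxE; congr (x 0 _).
    apply/val_inj => /=; rewrite !inordK //; have := ltn_ord c; lia.
  have gl c : gco c x = \sum_i l i * gco c U`_i.
    rewrite /gco; case: eqP => _.
      by under eq_bigr do rewrite mulr1; rewrite l1.
    by rewrite xl summxE; apply: eq_bigr => i _; rewrite mxE.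
  suff <- : x 0 (inord m.+1) = \sum_c a c * gco c y by apply: xi.
  transitivity (\sum_c a c * gco c x); last by apply: eq_bigr => c _; rewrite gx.
  rewrite {1}xl summxE.
  transitivity (\sum_i \sum_c l i * (a c * gco c U`_i)).
    by apply: eq_bigr => i _; rewrite mxE He ?mem_nth // mulr_sumr.
  rewrite exchange_big /=; apply: eq_bigr => c _; rewrite gl mulr_sumr.
  by apply: eq_bigr => i _; rewrite mulrCA.
have ha0 : is_intR (a 0).
  have := F 0 (fun i => ltac:(rewrite mxE; exact: intR0)).
  rewrite big_ord_recl /gco /= mulr1 big1 ?addr0 // => i _.
  by rewrite mxE mulr0.
move=> c; case: (unliftP ord0 c) => [i ->|->] //.
have := F (delta_mx 0 i) (fun j => ltac:(rewrite mxE; exact: intRn)).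
rewrite big_ord_recl (bigD1 i) //= big1 ?addr0.
  rewrite {1}/gco /= mulr1 gco_lift mxE !eqxx mulr1 => h.
  by have := intRD h (intRN ha0); rewrite addrC addKr.
by move=> j ji; rewrite gco_lift mxE eqxx /= (negbTE ji) mulr0.
Qed.

Definition Yg D k (p : 'I_k -> 'rV[R]_D.+1) : 'M[R]_k :=
  \matrix_(r, c) gco c (p r).
Definition colg D k (p : 'I_k -> 'rV[R]_D.+1) : 'cV[R]_k :=
  \col_r p r 0 (inord k.-1).

Lemma G m (W : seq 'rV[R]_m.+1) : lattice_face m W -> size W = m.+2 ->
  forall k (p : 'I_k -> 'rV[R]_m.+1) (a : 'cV[R]_k),
  (0 < k)%N -> (k <= m.+1)%N -> (forall r, p r \in W) ->
  \det (Yg p) != 0 -> Yg p *m a = colg p -> forall c, is_intR (a c 0).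
Proof.
elim: m W => [|m IH] W HW sW k p a k0 km pW dY Ya c.
  have Ek : k = 1%N by apply/eqP; rewrite eqn_leq km k0.
  subst k.
  have := congr1 (fun M : 'cV[R]_1 => M 0 0) Ya; rewrite !mxE big_ord1 !mxE /gco /= mul1r.
  rewrite (ord1 c) => ->.
  have := HW => -[_ Hi].
  by apply: Hi; rewrite (lf_vertices HW sW).
have VW := lf_vertices HW sW.
have uW : uniq W by rewrite -VW vertices_uniq.
case: HW => _ Hsub; rewrite VW in Hsub.
have up : injective p.
  move=> r1 r2 e; apply/eqP; apply/negPn/negP => ne.
  move/negP: dY; apply; apply/eqP; apply: (determinant_alternate ne) => c'.
  by rewrite !mxE e.
case: (ltngtP k m.+2) => [klt | kgt | ke].
- have : ~~ all (mem (codom p)) W.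
    apply/negP => /allP sub; have := uniq_leq_size uW sub.
    rewrite size_codom card_ord sW; lia.
  case/allPn => w wW wp.
  have sr : size (rem w W) = m.+2 by rewrite size_rem // sW.
  have [Hlf Hb] := Hsub (rem w W) (rem_subseq w W) sr.
  have pU r : p r \in rem w W.
    rewrite mem_rem_uniq // inE pW andbT.
    by apply: contraNneq wp => <-; exact: codom_f.
  pose p' r := proj_last (p r).
  have EY : Yg p' = Yg p.
    apply/matrixP => r c'; rewrite !mxE /gco; case: eqP => // c0.
    rewrite mxE; congr (p r 0 _); apply/val_inj => /=.
    rewrite !inordK //; have := ltn_ord c'; lia.
  have EC : colg p' = colg p.
    apply/matrixP => r c'; rewrite !mxE; congr (p r 0 _); apply/val_inj => /=.
    rewrite !inordK //; lia.
  have sm : size [seq proj_last x | x <- rem w W] = m.+2 by rewrite size_map.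
  have pm r : p' r \in [seq proj_last x | x <- rem w W] by apply: map_f.
  have dY' : \det (Yg p') != 0 by rewrite EY.
  have Ya' : Yg p' *m a = colg p' by rewrite EY EC.
  have km' : (k <= m.+1)%N by lia.
  exact: (IH _ Hlf sm k p' a k0 km' pm dY' Ya' c).
- by exfalso; lia.
subst k.
pose U := [seq w <- W | w \in codom p].
have sU : size U = m.+2.
  have : perm_eq U (codom p).
    apply: uniq_perm; first exact: filter_uniq.
      by rewrite /codom /image_mem (map_inj_uniq up) enum_uniq.
    move=> x; rewrite mem_filter; case: (boolP (x \in codom p)) => //= /codomP [r ->].
    exact: pW.
  by move/perm_size; rewrite size_codom card_ord.
have [_ Hb] := Hsub U (filter_subseq _ _) sU.
apply: (core (a := fun c => a c 0) (fun y hy => (Hb y).1 hy)) => u.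
rewrite mem_filter => /andP[/codomP [r ->] _].
have := congr1 (fun M : 'cV[R]_m.+2 => M r 0) Ya; rewrite !mxE /= => <-.
by apply: eq_bigr => c' _; rewrite mxE mulrC.
Qed.

End Proofs.

(* d = n.+1 ; vertices v_1..v_{d+1} are v 0 .. v (n.+1) *)
Theorem mainTheorem8 (R : realType) (n : nat) (v : 'I_n.+2 -> 'rV[R]_n.+1) :
  aff_indep v ->
  lattice_face n [seq v i | i : 'I_n.+2] ->
  forall (s : 'S_n.+1) (k j : nat),
    (1 <= k <= n.+1)%N -> (j < k)%N ->
    is_intR (mminor v s k j / \det (Ymx v s k)).
Proof.
move=> _ HW s k j /andP[k0 kn] jk.
pose p (r : 'I_k) := v (widen_ord (leqnSn n.+1) (s (inord r))).
have EY : Ymx v s k = Yg p by apply/matrixP => r c; rewrite !mxE.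
have [dY0|dY] := eqVneq (\det (Ymx v s k)) 0.
  by rewrite dY0 invr0 mulr0; apply: intR0.
rewrite EY in dY *.
have uY : Yg p \in unitmx by rewrite unitmxE unitfE.
pose a := invmx (Yg p) *m colg p.
have Ya : Yg p *m a = colg p by rewrite mulKVmx.
clearbody a.
have ai c : is_intR (a c 0).
  apply: (G HW _ k0 kn _ dY Ya).
    by rewrite size_image card_ord.
  by move=> r; apply: image_f.
rewrite /mminor.
pose t (c : 'I_k) : 'I_k.+1 := lift (inord j) c.
pose N : 'M[R]_k :=
  \matrix_(c', c) (if (t c < k)%N then (c' == t c :> nat)%:R else a c' 0).
have EM : (\matrix_(r < k, c < k) Amx v s k r (lift (inord j) c)) = Yg p *m N.
  apply/matrixP => r c; rewrite !mxE.
  under eq_bigr => i _ do rewrite !mxE.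
  have [tk|tk] := boolP (t c < k)%N.
    rewrite (bigD1 (Ordinal tk)) //= eqxx mulr1 big1 ?addr0.
      by rewrite /gco /xco.
    move=> i ne.
    have -> : (i == bump (inord j : 'I_k.+1) c :> nat) = false.
      by apply: negbTE; apply: contra ne => /eqP e; apply/eqP/val_inj.
    by rewrite mulr0.
  have tck : t c = k :> nat by have := ltn_ord (t c); move: tk; lia.
  have := congr1 (fun M : 'cV[R]_k => M r 0) Ya; rewrite !mxE => e.
  rewrite tck; have -> : (k == 0) = false by lia.
  rewrite /xco -e; apply: eq_bigr => i _; rewrite mxE mulrC.
  by [].
rewrite EM det_mulmx [_ * \det N]mulrC mulfK //.
rewrite /determinant; apply: big_ind => //; first exact: intR0; first exact: intRD.
move=> sg _; apply: intRM.
  by case: (sg : bool); rewrite ?expr1 ?expr0; [exists (-1) | exact: intR1].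
apply: big_ind => //; first exact: intR1; first exact: intRM.
move=> i _; rewrite mxE; case: ifP => _; [exact: intRn | exact: ai].
Qed.
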